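(* Consider the network described in the context with homogeneous all-to-all coupling $\varepsilon_{ij}=(1-\delta_{ij})\varepsilon$, $\varepsilon>0$, $(N-1)\varepsilon<1$, with an arbitrary rise function $U$ and an arbitrary partial reset function $R$. Then an asynchronous periodic (splay) state exists. More precisely, there is $\sigma^*>0$ with $\big[\bigodot_{s=1}^{N-1}(S_{\sigma^*}\circ H_\varepsilon)\big]\circ S_{\sigma^*}(0)=1$, and the units fire one at a time with all inter-firing intervals equal to $\sigma^*$.
   Context: Model: $N$ units with phases $\phi_i$. A rise function is a smooth $U:[0,\infty)\to[0,\infty)$ with $U'>0$, $U(0)=0$, $U(1)=1$; $U^{-1}$ is its inverse. A partial reset function is a monotonically increasing $R:\mathbb{R}\to\mathbb{R}$ with $R(0)=0$. For $\varepsilon\ge0$, $\sigma\in\mathbb{R}$: $H_\varepsilon(\phi)=U^{-1}(U(\phi)+\varepsilon)$, $J_\varepsilon(\phi)=U^{-1}(R(U(\phi)+\varepsilon-1))$, $S_\sigma(\phi)=\phi+\sigma$. Composition notation: $\bigodot_{s=p}^{q}(S_{\sigma_s}\circ H_{\varepsilon_s}):=S_{\sigma_q}\circ H_{\varepsilon_q}\circ\cdots\circ S_{\sigma_p}\circ H_{\varepsilon_p}$. Dynamics: $\varepsilon_{ij}\ge0$ is the strength of the pulse from unit $j$ to unit $i$. Between events every phase increases at unit rate. When at time $t$ the set $\Theta^{(0)}=\{j:\phi_j(t^-)=1\}$ is nonempty, an avalanche occurs: with $u_i^{(0)}=U(\phi_i(t^-))$, set $u_i^{(k+1)}=u_i^{(k)}+\sum_{j\in\Theta^{(k)}}\varepsilon_{ij}$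 and $\Theta^{(k+1)}=\{i:u_i^{(k)}<1\le u_i^{(k+1)}\}$ until empty; $\Theta=\bigcup_k\Theta^{(k)}$. Then $\phi_i(t^+)=H_{\sum_{j\in\Theta}\varepsilon_{ij}}(\phi_i(t^-))$ for $i\notin\Theta$ and $\phi_i(t^+)=J_{\sum_{j\in\Theta}\varepsilon_{ij}}(\phi_i(t^-))$ for $i\in\Theta$. The return map sends the state just before a fixed reference unit fires to the state just before it fires next. An asynchronous periodic state is a state invariant under the return map in which every avalanche has size $1$. *)

(* Defs.v *)
From Stdlib Require Import Reals Lra Lia Arith Bool.
Open Scope R_scope.
Open Scope bool_scope.

(* U : [0,oo) -> [0,oo) smooth with U' > 0, U(0)=0, U(1)=1.
   Represented by a total function R -> R whose values on negative
   arguments are irrelevant.  Smoothness on [0,oo): there is a family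
   D n of successive derivatives with D 0 = U on [0,oo), D n
   differentiable on (0,oo) with derivative D (S n), and every D n
   right-continuous at 0 (so D (S n) 0 is the one-sided derivative).
   U' = D 1 > 0 on [0,oo). *)
Definition rise_function (U : R -> R) : Prop :=
  exists D : nat -> R -> R,
    (forall x, 0 <= x -> D 0%nat x = U x) /\
    (forall n x, 0 < x -> derivable_pt_lim (D n) x (D (S n) x)) /\
    (forall n (eps : R), 0 < eps -> exists delta, 0 < delta /\
        forall x, 0 <= x < delta -> Rabs (D n x - D n 0) < eps) /\
    (forall x, 0 <= x -> 0 < D 1%nat x) /\
    (forall x, 0 <= x -> 0 <= U x) /\
    U 0 = 0 /\ U 1 = 1.

(* Uinv is the inverse of U restricted to [0,oo) (values outside the
   range U([0,oo)) are unspecified). *)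
Definition rise_inverse (U Uinv : R -> R) : Prop :=
  forall x, 0 <= x -> Uinv (U x) = x.

Definition partial_reset (Rst : R -> R) : Prop :=
  (forall x y, x <= y -> Rst x <= Rst y) /\ Rst 0 = 0.

Definition Hmap (U Uinv : R -> R) (e phi : R) : R := Uinv (U phi + e).
Definition Jmap (U Uinv Rst : R -> R) (e phi : R) : R :=
  Uinv (Rst (U phi + e - 1)).
Definition Smap (s phi : R) : R := phi + s.

Fixpoint sum_below (n : nat) (f : nat -> R) : R :=
  match n with
  | O => 0
  | S m => sum_below m f + f m
  end.

Definition Rltb (x y : R) : bool := if Rlt_dec x y then true else false.
Definition Rleb (x y : R) : bool := if Rle_dec x y then true else false.
Definition Reqb (x y : R) : bool := Rleb x y && Rleb y x.

Definition input (N : nat) (eps : nat -> nat -> R) (Th : nat -> bool) (i : nat) : R :=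
  sum_below N (fun j => if Th j then eps i j else 0).

(* k further avalanche rounds: u = u^(m), th = Theta^(m), acc = union so far *)
Fixpoint aval_iter (N : nat) (eps : nat -> nat -> R) (k : nat)
    (u : nat -> R) (th acc : nat -> bool) : nat -> bool :=
  match k with
  | O => acc
  | S k' =>
      let u' := fun i => u i + input N eps th i in
      let th' := fun i => Nat.ltb i N && Rltb (u i) 1 && Rleb 1 (u' i) in
      aval_iter N eps k' u' th' (fun i => acc i || th' i)
  end.

(* The avalanche set Theta triggered by the state phi (phases at t^-).
   At most N rounds are nonempty, so N+1 rounds compute the full union. *)
Definition avalanche (N : nat) (eps : nat -> nat -> R) (U : R -> R)
    (phi : nat -> R) : nat -> bool :=
  let th0 := fun j => Nat.ltb j N && Reqb (phi j) 1 in
  aval_iter N eps (S N) (fun i => U (phi i)) th0 th0.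

(* phases at t^+ *)
Definition post_event (N : nat) (eps : nat -> nat -> R) (U Uinv Rst : R -> R)
    (phi : nat -> R) (i : nat) : R :=
  let Th := avalanche N eps U phi in
  let e := input N eps Th i in
  if Th i then Jmap U Uinv Rst e (phi i) else Hmap U Uinv e (phi i).

(* After the event at state phi (phases at t^-), the phases grow at unit
   rate and the next event occurs after time delta, with phases phi'
   just before it (all <= 1, some = 1). *)
Definition next_event (N : nat) (eps : nat -> nat -> R) (U Uinv Rst : R -> R)
    (phi : nat -> R) (delta : R) (phi' : nat -> R) : Prop :=
  0 <= delta /\
  (forall i, (i < N)%nat -> phi' i = post_event N eps U Uinv Rst phi i + delta) /\
  (forall i, (i < N)%nat -> phi' i <= 1) /\
  (exists i, (i < N)%nat /\ phi' i = 1).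

Definition hom_coupling (e : R) (i j : nat) : R := if Nat.eqb i j then 0 else e.

(* Main.v *)
Require Import Defs.
From Stdlib Require Import Reals Lra Lia Arith Bool Ranalysis5.
Open Scope R_scope.

Lemma sum_below_ext n f g : (forall j, (j < n)%nat -> f j = g j) -> sum_below n f = sum_below n g.
Proof.
  induction n; intros H; simpl; [reflexivity|].
  rewrite IHn by (intros; apply H; lia). rewrite H by lia. reflexivity.
Qed.

Lemma sum_below_zero n : sum_below n (fun _ => 0) = 0.
Proof. induction n; simpl; [reflexivity|]. rewrite IHn; ring. Qed.

Lemma sum_below_single n k (c : nat -> R) :
  sum_below n (fun j => if Nat.eqb j k then c j else 0) = if Nat.ltb k n then c k else 0.
Proof.
  induction n; simpl.
  - destruct (Nat.ltb_spec k 0); [lia|reflexivity].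
  - rewrite IHn. destruct (Nat.ltb_spec k n), (Nat.eqb_spec n k), (Nat.ltb_spec k (S n));
      try lia; subst; ring.
Qed.

Lemma input_ext N eps Th Th' i : (forall j, Th j = Th' j) -> input N eps Th i = input N eps Th' i.
Proof. intros H; unfold input; apply sum_below_ext; intros; rewrite H; reflexivity. Qed.

Lemma aval_false N eps k : forall u th acc, (forall i, th i = false) ->
  forall i, aval_iter N eps k u th acc i = acc i.
Proof.
  induction k; intros u th acc Hth i; [reflexivity|].
  change (aval_iter N eps (S k) u th acc) with
    (aval_iter N eps k (fun i => u i + input N eps th i)
       (fun i => Nat.ltb i N && Rltb (u i) 1 && Rleb 1 (u i + input N eps th i))
       (fun i => acc i || (Nat.ltb i N && Rltb (u i) 1 && Rleb 1 (u i + input N eps th i)))).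
  rewrite IHk.
  - assert (E : input N eps th i = 0).
    { unfold input. rewrite (sum_below_ext _ _ (fun _ => 0)). apply sum_below_zero.
      intros; rewrite Hth; reflexivity. }
    rewrite E. unfold Rltb, Rleb. destruct (Rlt_dec (u i) 1), (Rle_dec 1 (u i + 0));
      try lra; rewrite ?andb_false_r; apply orb_false_r.
  - intros j. assert (E : input N eps th j = 0).
    { unfold input. rewrite (sum_below_ext _ _ (fun _ => 0)). apply sum_below_zero.
      intros; rewrite Hth; reflexivity. }
    rewrite E. unfold Rltb, Rleb. destruct (Rlt_dec (u j) 1), (Rle_dec 1 (u j + 0));
      try lra; apply andb_false_r.
Qed.

Lemma input_single N e k i : (k < N)%nat ->
  input N (hom_coupling e) (fun j => Nat.eqb j k) i = hom_coupling e i k.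
Proof.
  intros Hk. unfold input. rewrite sum_below_single.
  destruct (Nat.ltb_spec k N); [reflexivity|lia].
Qed.

Lemma aval_single N e (U : R -> R) phi k : (k < N)%nat -> U 1 = 1 -> phi k = 1 ->
  (forall i, (i < N)%nat -> i <> k -> phi i < 1 /\ U (phi i) + e < 1) ->
  forall i, avalanche N (hom_coupling e) U phi i = Nat.eqb i k.
Proof.
  intros Hk HU1 Hpk Hoth.
  assert (Hth0 : forall j, (Nat.ltb j N && Reqb (phi j) 1) = Nat.eqb j k).
  { intros j. destruct (Nat.eqb_spec j k).
    - subst. rewrite Hpk. destruct (Nat.ltb_spec k N); [|lia]. simpl.
      unfold Reqb, Rleb. destruct (Rle_dec 1 1); [reflexivity|lra].
    - destruct (Nat.ltb_spec j N); [|reflexivity]. simpl.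
      destruct (Hoth j) as [H1 _]; auto.
      unfold Reqb, Rleb. destruct (Rle_dec (phi j) 1), (Rle_dec 1 (phi j)); try lra; reflexivity. }
  intros i. unfold avalanche.
  set (th0 := fun j => Nat.ltb j N && Reqb (phi j) 1).
  change (aval_iter N (hom_coupling e) (S N) (fun i => U (phi i)) th0 th0) with
    (aval_iter N (hom_coupling e) N (fun i => U (phi i) + input N (hom_coupling e) th0 i)
       (fun i => Nat.ltb i N && Rltb (U (phi i)) 1 && Rleb 1 (U (phi i) + input N (hom_coupling e) th0 i))
       (fun i => th0 i || (Nat.ltb i N && Rltb (U (phi i)) 1 && Rleb 1 (U (phi i) + input N (hom_coupling e) th0 i)))).
  assert (Hin : forall j, input N (hom_coupling e) th0 j = hom_coupling e j k).
  { intros j. rewrite (input_ext _ _ _ (fun j => Nat.eqb j k)); [apply input_single; auto|].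
    intros; apply Hth0. }
  assert (Hf : forall j, (Nat.ltb j N && Rltb (U (phi j)) 1 && Rleb 1 (U (phi j) + input N (hom_coupling e) th0 j)) = false).
  { intros j. rewrite Hin. destruct (Nat.ltb_spec j N); [|reflexivity]. simpl.
    unfold hom_coupling. destruct (Nat.eqb_spec j k).
    - subst. rewrite Hpk, HU1. unfold Rltb. destruct (Rlt_dec 1 1); [lra|reflexivity].
    - destruct (Hoth j) as [_ H2]; auto. unfold Rleb.
      destruct (Rle_dec 1 (U (phi j) + e)); [lra|]. apply andb_false_r. }
  rewrite aval_false by exact Hf. rewrite Hf, orb_false_r. apply Hth0.
Qed.

Lemma post_single N e U Uinv Rst phi k i : (k < N)%nat -> U 1 = 1 -> phi k = 1 ->
  (forall i, (i < N)%nat -> i <> k -> phi i < 1 /\ U (phi i) + e < 1) ->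
  Rst 0 = 0 -> Uinv 0 = 0 ->
  post_event N (hom_coupling e) U Uinv Rst phi i = if Nat.eqb i k then 0 else Hmap U Uinv e (phi i).
Proof.
  intros Hk HU1 Hpk Hoth HR0 HUi0. unfold post_event. cbv zeta.
  pose proof (aval_single N e U phi k Hk HU1 Hpk Hoth) as Ha.
  rewrite (input_ext _ _ _ (fun j => Nat.eqb j k)) by apply Ha.
  rewrite input_single by auto. rewrite Ha.
  unfold hom_coupling. destruct (Nat.eqb_spec i k); [|reflexivity].
  subst. unfold Jmap. rewrite Hpk, HU1.
  replace (1 + 0 - 1) with 0 by ring. rewrite HR0. exact HUi0.
Qed.

Definition idx (N k i : nat) : nat := if Nat.ltb i k then (k - i - 1)%nat else (k + N - i - 1)%nat.

Lemma dyn N U Uinv Rst e sigma (z : nat -> R) :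
  (1 <= N)%nat -> 0 < sigma -> U 1 = 1 -> Rst 0 = 0 -> Uinv 0 = 0 ->
  z 0%nat = sigma -> (forall m, z (S m) = Hmap U Uinv e (z m) + sigma) ->
  z (N - 1)%nat = 1 ->
  (forall m, (m < N - 1)%nat -> z m < 1 /\ U (z m) + e < 1) ->
  (forall m, (m <= N - 1)%nat -> z m <= 1) ->
    exists (psi : nat -> nat -> R) (f : nat -> nat),
      psi 0%nat 0%nat = 1 /\
      f 0%nat = 0%nat /\
      (forall k, (k < N)%nat ->
         (f k < N)%nat /\
         (forall i, avalanche N (hom_coupling e) U (psi k) i = Nat.eqb i (f k)) /\
         next_event N (hom_coupling e) U Uinv Rst (psi k) sigma (psi (S k))) /\
      (forall k l, (k < N)%nat -> (l < N)%nat -> f k = f l -> k = l) /\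
      (forall i, (i < N)%nat -> psi N i = psi 0%nat i).
Proof.
  intros HN Hs HU1 HR0 HUi0 Hz0 Hz Hlast Hlt Hle.
  exists (fun k i => z (idx N k i)), (fun k => k).
  assert (Ikk : forall k, (k < N)%nat -> idx N k k = (N - 1)%nat).
  { intros k Hk; unfold idx; destruct (Nat.ltb_spec k k); lia. }
  assert (Iki : forall k i, (k < N)%nat -> (i < N)%nat -> i <> k -> (idx N k i < N - 1)%nat).
  { intros k i Hk Hi Hne; unfold idx; destruct (Nat.ltb_spec i k); lia. }
  assert (Ile : forall k i, (k <= N)%nat -> (i < N)%nat -> (idx N k i <= N - 1)%nat).
  { intros k i Hk Hi; unfold idx; destruct (Nat.ltb_spec i k); lia. }
  assert (IS : forall k i, (k < N)%nat -> (i < N)%nat -> i <> k -> idx N (S k) i = S (idx N k i)).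
  { intros k i Hk Hi Hne; unfold idx; destruct (Nat.ltb_spec i k), (Nat.ltb_spec i (S k)); lia. }
  assert (I0 : forall k, idx N (S k) k = 0%nat).
  { intros k; unfold idx; destruct (Nat.ltb_spec k (S k)); lia. }
  split; [|split; [reflexivity|split; [|split]]].
  - change (z (idx N 0 0) = 1). rewrite Ikk by lia. exact Hlast.
  - intros k Hk.
    assert (Hpk : z (idx N k k) = 1) by (rewrite Ikk; auto).
    assert (Hoth : forall i, (i < N)%nat -> i <> k -> z (idx N k i) < 1 /\ U (z (idx N k i)) + e < 1).
    { intros i Hi Hne. apply Hlt. apply Iki; auto. }
    split; [exact Hk|split].
    + apply (aval_single N e U (fun i => z (idx N k i)) k Hk HU1 Hpk Hoth).
    + split; [lra|split; [|split]].
      * intros i Hi. rewrite (post_single N e U Uinv Rst (fun i => z (idx N k i)) k i Hk HU1 Hpk Hoth HR0 HUi0).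
        destruct (Nat.eqb_spec i k).
        -- subst i. rewrite I0.
           rewrite Hz0; ring.
        -- rewrite IS by auto. rewrite Hz. reflexivity.
      * intros i Hi. apply Hle. apply Ile; lia.
      * destruct (Nat.ltb_spec (S k) N).
        -- exists (S k). split; [assumption|]. cbn beta. rewrite Ikk by assumption. exact Hlast.
        -- exists 0%nat. split; [lia|]. cbn beta.
           replace (idx N (S k) 0) with (N - 1)%nat; [exact Hlast|].
           unfold idx; destruct (Nat.ltb_spec 0 (S k)); lia.
  - intros; lia.
  - intros i Hi. cbn beta. f_equal. unfold idx. destruct (Nat.ltb_spec i N), (Nat.ltb_spec i 0); lia.
Qed.

Lemma cont_intro f x0 : (forall eps, 0 < eps -> exists alp, 0 < alp /\
   forall x, Rabs (x - x0) < alp -> Rabs (f x - f x0) < eps) -> continuity_pt f x0.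
Proof.
  intros H eps Heps. destruct (H eps Heps) as [alp [Ha Hx]].
  exists alp; split; [lra|]. intros x [_ Hd]. apply Hx. exact Hd.
Qed.

Lemma cont_elim f x0 : continuity_pt f x0 -> forall eps, 0 < eps -> exists alp, 0 < alp /\
   forall x, Rabs (x - x0) < alp -> Rabs (f x - f x0) < eps.
Proof.
  intros H eps Heps. destruct (H eps Heps) as [alp [Ha Hx]].
  exists alp; split; [lra|]. intros x Hd.
  destruct (Req_dec x x0) as [->|Hne].
  - unfold Rminus; rewrite Rplus_opp_r, Rabs_R0; lra.
  - apply (Hx x). split; [split; [exact I|auto]|exact Hd].
Qed.

Lemma lip_cont f : (forall a b, Rabs (f a - f b) <= Rabs (a - b)) -> continuity f.
Proof.
  intros H x. apply cont_intro. intros eps Heps. exists eps; split; auto.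
  intros y Hy. eapply Rle_lt_trans; [apply H|exact Hy].
Qed.

Section A.
Variables (U Uinv : R -> R) (D : nat -> R -> R) (e : R).
Hypothesis HD0 : forall x, 0 <= x -> D 0%nat x = U x.
Hypothesis Hder : forall n x, 0 < x -> derivable_pt_lim (D n) x (D (S n) x).
Hypothesis Hrc : forall n (eps : R), 0 < eps -> exists delta, 0 < delta /\
        forall x, 0 <= x < delta -> Rabs (D n x - D n 0) < eps.
Hypothesis HD1 : forall x, 0 <= x -> 0 < D 1%nat x.
Hypothesis Hnn : forall x, 0 <= x -> 0 <= U x.
Hypothesis HU0 : U 0 = 0.
Hypothesis HU1 : U 1 = 1.
Hypothesis Hinv : forall x, 0 <= x -> Uinv (U x) = x.
Hypothesis He : 0 < e.
Hypothesis He1 : e < 1.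

Lemma Ustrict x y : 0 < x -> x < y -> U x < U y.
Proof.
  intros Hx Hxy.
  destruct (MVT_cor2 (D 0%nat) (D 1%nat) x y Hxy) as [c [Hc Hcc]].
  { intros c Hc. apply Hder. lra. }
  rewrite !HD0 in Hc by lra.
  assert (0 < D 1%nat c) by (apply HD1; lra).
  assert (0 < D 1%nat c * (y - x)) by (apply Rmult_lt_0_compat; lra). lra.
Qed.

Lemma Umono x y : 0 <= x -> x <= y -> U x <= U y.
Proof.
  intros Hx Hxy. destruct (Req_dec x y) as [->|Hne]; [lra|].
  destruct (Req_dec x 0) as [->|Hx0].
  - rewrite HU0; apply Hnn; lra.
  - left; apply Ustrict; lra.
Qed.

Lemma D0cont x : 0 < x -> continuity_pt (D 0%nat) x.
Proof. intros Hx. apply derivable_continuous_pt. exists (D 1%nat x). apply Hder; auto. Qed.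

Definition Uc x := D 0%nat (Rmax 0 x).

Lemma Uc_cont : continuity Uc.
Proof.
  intros x. apply cont_intro. intros eps Heps. unfold Uc.
  destruct (Rtotal_order x 0) as [Hx|[Hx|Hx]].
  - exists (- x). split; [lra|]. intros y Hy.
    rewrite (Rmax_left 0 y), (Rmax_left 0 x) by (split_Rabs; lra).
    unfold Rminus; rewrite Rplus_opp_r, Rabs_R0; lra.
  - subst. destruct (Hrc 0%nat eps Heps) as [d [Hd Hd']]. exists d; split; auto.
    intros y Hy. rewrite (Rmax_left 0 0) by lra.
    destruct (Rle_dec y 0).
    + rewrite Rmax_left by lra. unfold Rminus; rewrite Rplus_opp_r, Rabs_R0; lra.
    + rewrite Rmax_right by lra. apply Hd'. split_Rabs; lra.
  - destruct (cont_elim _ _ (D0cont x Hx) eps Heps) as [d [Hd Hd']].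
    exists (Rmin d x). split; [apply Rmin_pos; lra|]. intros y Hy.
    assert (Hm1 := Rmin_l d x). assert (Hm2 := Rmin_r d x).
    rewrite (Rmax_right 0 y), (Rmax_right 0 x) by (split_Rabs; lra).
    apply Hd'. lra.
Qed.

Lemma Uc_eq x : 0 <= x -> Uc x = U x.
Proof. intros Hx. unfold Uc. rewrite Rmax_right by lra. apply HD0; lra. Qed.

Lemma Uc_mono x y : x <= y -> Uc x <= Uc y.
Proof.
  intros Hxy. unfold Uc. rewrite !HD0 by apply Rmax_l.
  apply Umono; [apply Rmax_l|]. apply Rle_max_compat_l; auto.
Qed.

Definition cl y := Rmin (Rmax y e) 1.

Lemma cl_lip a b : Rabs (cl a - cl b) <= Rabs (a - b).
Proof. unfold cl, Rmin, Rmax. repeat destruct Rle_dec; split_Rabs; lra. Qed.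

Lemma cl_range y : e <= cl y <= 1.
Proof. unfold cl, Rmin, Rmax. repeat destruct Rle_dec; lra. Qed.

Lemma cl_id y : e <= y <= 1 -> cl y = y.
Proof. unfold cl, Rmin, Rmax. repeat destruct Rle_dec; lra. Qed.

Lemma cl_one y : 1 <= y -> cl y = 1.
Proof. unfold cl, Rmin, Rmax. repeat destruct Rle_dec; lra. Qed.

Lemma cl_mono a b : a <= b -> cl a <= cl b.
Proof. unfold cl, Rmin, Rmax. repeat destruct Rle_dec; lra. Qed.

Lemma lb_exists : exists lb, 0 < lb < 1 /\ D 0%nat lb < e.
Proof.
  destruct (Hrc 0%nat e He) as [d [Hd Hd']].
  exists (Rmin (d/2) (1/2)).
  assert (Hm1 := Rmin_l (d/2) (1/2)). assert (Hm2 := Rmin_r (d/2) (1/2)).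
  assert (Hp : 0 < Rmin (d/2) (1/2)) by (apply Rmin_pos; lra).
  split; [lra|].
  assert (H0 := Hd' (Rmin (d/2) (1/2))). rewrite (HD0 0), HU0 in H0 by lra.
  assert (Rabs (D 0%nat (Rmin (d / 2) (1 / 2)) - 0) < e) by (apply H0; lra).
  split_Rabs; lra.
Qed.

Variable lb : R.
Hypothesis Hlb : 0 < lb < 1.
Hypothesis Hlbe : D 0%nat lb < e.

Lemma D2 : 1 < D 0%nat 2.
Proof. rewrite HD0 by lra. rewrite <- HU1 at 1. apply Ustrict; lra. Qed.

Lemma Uinv_spec y : D 0%nat lb <= y <= D 0%nat 2 -> lb <= Uinv y <= 2 /\ U (Uinv y) = y.
Proof.
  intros Hy.
  destruct (f_interv_is_interv (D 0%nat) lb 2 y) as [x [Hx Hfx]]; try lra.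
  { intros a Ha; apply D0cont; lra. }
  rewrite HD0 in Hfx by lra. subst y. rewrite Hinv by lra. split; [lra|reflexivity].
Qed.

Lemma Uinv_cont b : D 0%nat lb < b < D 0%nat 2 -> continuity_pt Uinv b.
Proof.
  intros Hb. apply (continuity_pt_recip_interv (D 0%nat) Uinv lb 2); try lra.
  - intros x y Hx Hxy Hy. rewrite !HD0 by lra. apply Ustrict; lra.
  - intros x H1 H2. unfold comp, id. destruct (Uinv_spec x) as [Hr Hu]; [lra|].
    rewrite HD0 by lra. exact Hu.
  - intros x H1 H2. apply Uinv_spec; lra.
  - intros a Ha; apply D0cont; lra.
Qed.

Definition Vc y := Uinv (cl y).

Lemma Vc_spec y : lb <= Vc y <= 2 /\ U (Vc y) = cl y.
Proof. unfold Vc. apply Uinv_spec. pose proof (cl_range y). pose proof D2. lra. Qed.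

Lemma Vc_cont : continuity Vc.
Proof.
  intros x. unfold Vc. change (continuity_pt (comp Uinv cl) x).
  apply continuity_pt_comp.
  - apply lip_cont. apply cl_lip.
  - apply Uinv_cont. pose proof (cl_range x). pose proof D2. lra.
Qed.

Lemma Vc_mono a b : a <= b -> Vc a <= Vc b.
Proof.
  intros Hab. destruct (Vc_spec a) as [Ha1 Ha2]. destruct (Vc_spec b) as [Hb1 Hb2].
  pose proof (cl_mono a b Hab).
  destruct (Rle_dec (Vc a) (Vc b)) as [|Hn]; auto.
  assert (U (Vc b) < U (Vc a)) by (apply Ustrict; lra). lra.
Qed.

Lemma Vc_one y : 1 <= y -> Vc y = 1.
Proof. intros Hy. unfold Vc. rewrite cl_one by auto. rewrite <- HU1 at 1. apply Hinv; lra. Qed.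

Definition Gc s x := Vc (Uc x + e) + s.
Definition F s m := Nat.iter m (Gc s) s.

Lemma F_cont m : continuity (fun s => F s m).
Proof.
  induction m; intros x.
  - apply (lip_cont (fun s => F s 0)). intros a b; unfold F; simpl; apply Rle_refl.
  - change (continuity_pt (fun s => Vc (Uc (F s m) + e) + s) x).
    change (continuity_pt (plus_fct (comp Vc (plus_fct (comp Uc (fun s => F s m)) (fun _ => e))) id) x).
    apply continuity_pt_plus.
    + apply continuity_pt_comp; [|apply Vc_cont].
      apply continuity_pt_plus; [|apply continuity_pt_const; intros ??; reflexivity].
      apply continuity_pt_comp; [apply IHm|apply Uc_cont].
    + apply (lip_cont id). intros a b; unfold id; apply Rle_refl.
Qed.

Lemma F0 m : (INR m * e <= 1) -> 0 <= F 0 m /\ U (F 0 m) = INR m * e.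
Proof.
  induction m; intros Hm.
  - unfold F; simpl. rewrite HU0. split; lra.
  - rewrite S_INR in Hm. destruct IHm as [H1 H2]; [nra|].
    unfold F. change (Nat.iter (S m) (Gc 0) 0) with (Gc 0 (F 0 m)). unfold Gc.
    rewrite Uc_eq by auto. rewrite H2. destruct (Vc_spec (INR m * e + e)) as [Hv Hu].
    rewrite cl_id in Hu by (pose proof (pos_INR m); nra).
    rewrite S_INR. split; [lra|]. rewrite Rplus_0_r, Hu. ring.
Qed.

Lemma F1 m : 1 <= F 1 m.
Proof.
  induction m; unfold F; simpl; [lra|]. fold (F 1 m). unfold Gc at 1.
  destruct (Vc_spec (Uc (F 1 m) + e)); lra.
Qed.

Lemma F_ge s m : 0 <= s -> s <= F s m.
Proof.
  intros Hs. destruct m; unfold F; simpl; [lra|]. unfold Gc at 1.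
  match goal with |- context [Vc ?y] => destruct (Vc_spec y) end. lra.
Qed.

Lemma F_step s m : 0 <= s -> F s m <= F s (S m).
Proof.
  intros Hs. induction m.
  - unfold F; simpl. unfold Gc. destruct (Vc_spec (Uc s + e)); lra.
  - change (F s (S m)) with (Gc s (F s m)). change (F s (S (S m))) with (Gc s (F s (S m))).
    unfold Gc. apply Rplus_le_compat_r. apply Vc_mono. apply Rplus_le_compat_r. apply Uc_mono. auto.
Qed.

Lemma F_mono s m d : 0 <= s -> F s m <= F s (m + d).
Proof.
  intros Hs. induction d. rewrite Nat.add_0_r; lra.
  rewrite Nat.add_succ_r. pose proof (F_step s (m + d) Hs). lra.
Qed.

End A.

Theorem mainTheorem2 (N : nat) (U Uinv Rst : R -> R) (e : R) :
  (1 <= N)%nat ->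
  rise_function U -> rise_inverse U Uinv -> partial_reset Rst ->
  0 < e -> INR (N - 1) * e < 1 ->
  exists sigma : R, 0 < sigma /\
    Nat.iter (N - 1) (fun x => Smap sigma (Hmap U Uinv e x)) (Smap sigma 0) = 1 /\
    exists (psi : nat -> nat -> R) (f : nat -> nat),
      psi 0%nat 0%nat = 1 /\
      f 0%nat = 0%nat /\
      (forall k, (k < N)%nat ->
         (f k < N)%nat /\
         (forall i, avalanche N (hom_coupling e) U (psi k) i = Nat.eqb i (f k)) /\
         next_event N (hom_coupling e) U Uinv Rst (psi k) sigma (psi (S k))) /\
      (forall k l, (k < N)%nat -> (l < N)%nat -> f k = f l -> k = l) /\
      (forall i, (i < N)%nat -> psi N i = psi 0%nat i).
Proof.
  intros HN HU HUi HR He HNe.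
  destruct HU as [D [HD0 [Hder [Hrc [HD1 [Hnn [HU0 HU1]]]]]]].
  destruct HR as [_ HR0].
  assert (HUi0 : Uinv 0 = 0) by (pose proof (HUi 0 (Rle_refl 0)) as H; rewrite HU0 in H; exact H).
  set (zh := fun s m => Nat.iter m (fun x => Smap s (Hmap U Uinv e x)) (Smap s 0)).
  assert (Hzh0 : forall s, zh s 0%nat = s) by (intros; simpl; unfold Smap; ring).
  assert (HzhS : forall s m, zh s (S m) = Hmap U Uinv e (zh s m) + s) by reflexivity.
  destruct (Nat.eq_dec N 1) as [HN1|HN1].
  - subst N. exists 1. split; [lra|]. split; [apply Hzh0|].
    apply (dyn 1 U Uinv Rst e 1 (zh 1)); auto; try lra.
    + intros m Hm; lia.
    + intros m Hm. replace m with 0%nat by lia. rewrite Hzh0; lra.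
  - set (n := (N - 1)%nat).
    assert (Hn1 : 1 <= INR n) by (change 1 with (INR 1); apply le_INR; unfold n; lia).
    assert (HNe2 : INR n * e < 1) by exact HNe.
    assert (He1 : e < 1) by (assert (0 <= (INR n - 1) * e) by (apply Rmult_le_pos; lra); lra).
    destruct (lb_exists U D e HD0 Hrc HU0 He) as [lb [Hlb Hlbe]].
    pose proof (F0 U Uinv D e HD0 Hder HD1 HU0 HU1 HUi He He1 lb Hlb Hlbe n) as HF0.
    pose proof (F1 U Uinv D e HD0 Hder HD1 HU1 HUi He1 lb Hlb Hlbe n) as HF1.
    pose proof (F_cont U Uinv D e HD0 Hder Hrc HD1 HU1 HUi He1 lb Hlb Hlbe n) as HFc.
    pose proof (Umono U D HD0 Hder HD1 Hnn HU0) as Um.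
    destruct HF0 as [HF00 HF0U]; [lra|].
    assert (HF0lt : F Uinv D e 0 n < 1).
    { destruct (Rlt_dec (F Uinv D e 0 n) 1) as [|Hc]; auto.
      assert (U 1 <= U (F Uinv D e 0 n)) by (apply Um; lra). lra. }
    destruct (IVT_cor (fun s => F Uinv D e s n - 1) 0 1) as [s [Hs Hfs]].
    { intros x. apply (continuity_pt_minus (fun s => F Uinv D e s n) (fun _ => 1)).
      apply HFc. apply continuity_pt_const. intros ??; reflexivity. }
    { lra. }
    { nra. }
    assert (Hspos : 0 < s).
    { destruct (Req_dec s 0) as [->|]; [lra|lra]. }
    set (z := F Uinv D e s).
    assert (Hzge : forall m, s <= z m) by (intros; apply (F_ge U Uinv D e HD0 Hder HD1 HU1 HUi He1 lb Hlb Hlbe); lra).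
    assert (Hzn : z n = 1) by (unfold z; lra).
    assert (Hzle : forall m, (m <= n)%nat -> z m <= 1).
    { intros m Hm. rewrite <- Hzn. replace n with (m + (n - m))%nat by lia.
      apply (F_mono U Uinv D e HD0 Hder HD1 Hnn HU0 HU1 HUi He1 lb Hlb Hlbe); lra. }
    assert (Hzlt : forall m, (m < n)%nat -> U (z m) + e < 1).
    { intros m Hm. destruct (Rlt_dec (U (z m) + e) 1) as [|Hc]; auto.
      assert (Hs1 : z (S m) = 1 + s).
      { change (z (S m)) with (Gc Uinv D e s (z m)). unfold Gc.
        rewrite (Uc_eq U D HD0) by (pose proof (Hzge m); lra).
        rewrite (Vc_one U Uinv e HU1 HUi He1) by lra. reflexivity. }
      pose proof (Hzle (S m) ltac:(lia)). lra. }
    assert (Heq : forall m, (m <= n)%nat -> zh s m = z m).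
    { induction m; intros Hm.
      - rewrite Hzh0. reflexivity.
      - rewrite HzhS, IHm by lia.
        change (z (S m)) with (Gc Uinv D e s (z m)). unfold Gc, Vc, Hmap.
        rewrite (Uc_eq U D HD0) by (pose proof (Hzge m); lra).
        rewrite (cl_id e He1). reflexivity.
        pose proof (Hzlt m ltac:(lia)). pose proof (Hnn (z m)). pose proof (Hzge m). lra. }
    exists s. split; [exact Hspos|]. split.
    + fold n. change (zh s n = 1). rewrite Heq by lia. exact Hzn.
    + apply (dyn N U Uinv Rst e s (zh s)); auto.
      * fold n. rewrite Heq by lia. exact Hzn.
      * fold n. intros m Hm. rewrite Heq by lia. pose proof (Hzlt m Hm). split; [|lra].
        destruct (Rlt_dec (z m) 1) as [|Hc]; auto.
        assert (U 1 <= U (z m)) by (apply Um; lra). lra.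
      * fold n. intros m Hm. rewrite Heq by lia. auto.
Qed.
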